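(* Let $(\Omega,\mathcal{A},\mu)$ be a diffuse $\sigma$-finite measure space, let $p\in[1,\infty)$, and let $q\in(1,\infty]$ with $\frac1p+\frac1q=1$. Let $\eta\in L_q(\mu)$ and $g\in L_p(\mu)$ with $\eta\ge0$, $g\ge0$, and define $K\in\mathcal{L}(L_p(\mu))$ by \[ Kf:=\Bigl(\int\eta f\,d\mu\Bigr)g\qquad(f\in L_p(\mu)). \] Let $u\in L_\infty(\mu)$ with $u\ge0$ be such that $M_u\le K$, i.e. $K-M_u$ is a positive operator. Then $u=0$.
   Context: $\mu$ is diffuse if every measurable $A$ with $\mu(A)>0$ contains a measurable $A'$ with $0<\mu(A')<\mu(A)$. $M_u$ is the multiplication operator $M_uf:=uf$ on $L_p(\mu)$. An operator $S\in\mathcal{L}(L_p(\mu))$ is positive if $Sf\ge0$ for all $f\ge0$ in $L_p(\mu)$; $S\le T$ means $T-S$ is positive. *)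

(* Defs.v *)
From HB Require Import structures.
From mathcomp Require Import all_boot all_order all_algebra.
From mathcomp Require Import all_classical all_reals all_analysis.
Set Implicit Arguments. Unset Strict Implicit. Unset Printing Implicit Defensive.
Import Order.TTheory GRing.Theory Num.Theory.
Local Open Scope classical_set_scope.
Local Open Scope ring_scope.

Definition diffuse d (T : measurableType d) (R : realType)
    (mu : {measure set T -> \bar R}) : Prop :=
  forall A : set T, measurable A -> (0 < mu A)%E ->
    exists A' : set T, [/\ measurable A', A' `<=` A,
                           (0 < mu A')%E & (mu A' < mu A)%E].

Definition Kop d (T : measurableType d) (R : realType)
    (mu : {measure set T -> \bar R}) (eta g f : T -> R) : T -> R :=
  fun x => fine (\int[mu]_y ((eta y * f y)%:E))%E * g x.

(* Main.v *)
Require Import Defs.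
From HB Require Import structures.
From mathcomp Require Import all_boot all_order all_algebra.
From mathcomp Require Import all_classical all_reals all_analysis.
From mathcomp Require Import measurable_realfun.
Import Order.TTheory GRing.Theory Num.Theory.
Local Open Scope classical_set_scope.
Local Open Scope ring_scope.
Lemma Lfun_indic1 d (T : measurableType d) (R : realType)
    (mu : {measure set T -> \bar R}) (p : R) (B : set T) :
  1 <= p -> measurable B -> (mu B < +oo)%E -> (\1_B : T -> R) \in Lfun mu p%:E.
Proof.
move=> p1 mB muB.
rewrite inE; apply/andP; split.
  rewrite inE; exact: measurable_indic.
rewrite inE /= /finite_norm unlock /Lnorm.
apply: poweR_lty.
have p0 : p != 0 by rewrite gt_eqF // (lt_le_trans ltr01 p1).
under eq_integral => x _.
  rewrite (_ : _ `^ p = (\1_B x)%:E)%E; last first.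
    rewrite /= indicE; case: (x \in B) => /=.
      by rewrite normr1 powR1.
    by rewrite normr0 powR0.
  over.
by rewrite integral_indic // setIT.
Qed.
Lemma diffuse_small d (T : measurableType d) (R : realType)
    (mu : {measure set T -> \bar R}) (A : set T) (del : R) :
  diffuse mu -> measurable A -> (mu A < +oo)%E -> 0 < del ->
  (forall B, measurable B -> B `<=` A -> (0 < mu B)%E -> (del%:E <= mu B)%E) ->
  mu A = 0%E.
Proof.
move=> dif mA muA del0 H.
have [//|] := eqVneq (mu A) 0%E.
move=> muA0.
have muApos : (0 < mu A)%E by rewrite lt_neqAle eq_sym muA0 measure_ge0.
have key : forall k : nat, forall B, measurable B -> B `<=` A -> (0 < mu B)%E ->
    (((2 ^+ k) * del)%:E <= mu B)%E.
  elim=> [|k IH] B mB BA muB.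
    by rewrite expr0 mul1r; exact: H.
  have [B' [mB' B'B muB' muB'B]] := dif B mB muB.
  have mD : measurable (B `\` B') by exact: measurableD.
  have eB : mu B = (mu B' + mu (B `\` B'))%E.
    rewrite -measureU //; first by rewrite setDUK.
    by rewrite setDIK.
  have muD : (0 < mu (B `\` B'))%E.
    rewrite lt_neqAle measure_ge0 andbT; apply/eqP => h.
    by move: muB'B; rewrite eB -h adde0 ltxx.
  rewrite eB exprS -mulrA mulr_natl mulr2n EFinD.
  apply: leeD; first by apply: IH => //; exact: subset_trans B'B BA.
  by apply: IH => //; apply: subset_trans BA; apply: subDsetl.
have [r Er] : exists r : R, mu A = r%:E.
  exists (fine (mu A)); rewrite fineK //.
  by rewrite ge0_fin_numE // measure_ge0.
have hr : forall k : nat, 2 ^+ k * del <= r.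
  by move=> k; rewrite -lee_fin -Er; exact: key.
have r0 : 0 <= r by rewrite -lee_fin -Er measure_ge0.
pose n := Num.truncn (r / del).
have h1 : r / del < n.+1%:R by exact: truncnS_gt.
have h2 : (n.+1 < 2 ^ n.+1)%N by apply: ltn_expl.
have h3 : n.+1%:R < (2 ^+ n.+1 : R).
  by rewrite -natrX ltr_nat.
have := hr n.+1.
have : r < n.+1%:R * del by rewrite -ltr_pdivrMr.
move=> h4 h5.
have : n.+1%:R * del < 2 ^+ n.+1 * del by rewrite ltr_pM2r.
move=> h6.
have := lt_le_trans (lt_trans h4 h6) h5.
by rewrite ltxx.
Qed.
Lemma lower_bound d (T : measurableType d) (R : realType)
    (mu : {measure set T -> \bar R}) (p : R) (eta g u : T -> R)
    (N A : set T) (eps M : R) :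
  1 <= p -> measurable_fun setT eta -> 0 < eps -> 0 < M ->
  (forall x, ~ N x -> 0 <= eta x /\ 0 <= g x) ->
  (forall x, A x -> [/\ ~ N x, eps <= u x, eta x <= M & g x <= M]) ->
  measurable A -> (mu A < +oo)%E ->
  (forall f : T -> R, f \in Lfun mu p%:E ->
     {ae mu, forall x, 0 <= f x} ->
     {ae mu, forall x, 0 <= Kop mu eta g f x - u x * f x}) ->
  forall B, measurable B -> B `<=` A -> (0 < mu B)%E ->
    ((eps / (M * M))%:E <= mu B)%E.
Proof.
move=> p1 meta eps0 M0 HN HA mA muA HK B mB BA muB.
have muBA : (mu B <= mu A)%E by apply: le_measure; rewrite ?inE.
have muBf : (mu B < +oo)%E by exact: le_lt_trans muBA muA.
have h0 : {ae mu, forall x, 0 <= (\1_B x : R)}.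
  by apply: nearW => x; rewrite indicE; case: (_ \in _).
have hB := HK _ (@Lfun_indic1 _ _ _ mu _ _ p1 mB muBf) h0.
case: hB => NB [mNB NB0 sNB].
have [x [Bx NBx]] : exists x, B x /\ ~ NB x.
  apply: contrapT => hne.
  have : (mu B <= mu NB)%E.
    apply: le_measure; rewrite ?inE //.
    move=> y By; apply: contrapT => NBy; apply: hne; by exists y.
  by rewrite NB0 => h; move: (lt_le_trans muB h); rewrite ltxx.
have hx : 0 <= Kop mu eta g \1_B x - u x * \1_B x.
  apply: contrapT => h; apply: NBx; apply: sNB; exact: h.
move: hx; rewrite /Kop indicE mem_set // mulr1.
set I := (\int[mu]_y _)%E.
have [NAx epsu etaM gM] := HA x (BA x Bx).
have [_ g0] := HN x NAx.
move=> hx.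
have cM : eps <= fine I * M.
  have : eps <= fine I * g x by rewrite -subr_ge0; apply: le_trans hx _; rewrite lerB.
  move=> h1.
  have [c0|c0] := leP 0 (fine I).
    by apply: le_trans h1 _; apply: ler_wpM2l.
  have : fine I * g x <= 0 by rewrite nmulr_rle0.
  by move=> h2; have := le_trans h1 h2; rewrite leNgt eps0.
have I0 : (0 <= I)%E.
  apply: integral_ge0 => y _; rewrite lee_fin indicE.
  case: (boolP (y \in B)) => yB; last by rewrite mulr0.
  rewrite mulr1; apply: (HN y _).1.
  by have [] := HA y (BA y (set_mem yB)).
have IM : (I <= M%:E * mu B)%E.
  have -> : (M%:E * mu B = \int[mu]_y (M * \1_B y)%:E)%E.
    rewrite (@integralZl_indic _ _ _ mu setT measurableT (fun=> B) M) //=; last first.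
      by move=> h; move: (lt_trans h M0); rewrite ltxx.
    by rewrite integral_indic // setIT.
  apply: ge0_le_integral => //.
  - move=> y _; rewrite lee_fin indicE.
    case: (boolP (y \in B)) => yB; last by rewrite mulr0.
    rewrite mulr1; apply: (HN y _).1.
    by have [] := HA y (BA y (set_mem yB)).
  - by apply: measurableT_comp => //; apply: measurable_funM => //;
      try exact: measurable_indic.
  - by apply: measurableT_comp => //; apply: measurable_funM => //;
      try exact: measurable_indic.
  - move=> y _; rewrite lee_fin indicE.
    case: (boolP (y \in B)) => yB; last by rewrite !mulr0.
    rewrite !mulr1.
    by have [] := HA y (BA y (set_mem yB)).
have [b Eb] : exists b : R, mu B = b%:E.
  exists (fine (mu B)); rewrite fineK //.
  by rewrite ge0_fin_numE // measure_ge0.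
have Ifin : I \is a fin_num.
  by rewrite ge0_fin_numE //; apply: le_lt_trans IM _; rewrite Eb ltry.
move: IM; rewrite -(fineK Ifin) Eb -EFinM lee_fin => IM.
rewrite lee_fin ler_pdivrMr ?mulr_gt0 //.
apply: (le_trans cM).
rewrite mulrA.
by apply: ler_wpM2r; [exact: ltW M0|rewrite mulrC].
Qed.
Lemma meas_ge d (T : measurableType d) (R : realType) (f : T -> R) c :
  measurable_fun setT f -> measurable [set x | c <= f x].
Proof.
move=> mf; have := mf measurableT _ (measurable_itv `[c, +oo[); rewrite setTI.
congr measurable; apply/seteqP; split => x /=; by rewrite in_itv /= andbT.
Qed.

Lemma meas_le d (T : measurableType d) (R : realType) (f : T -> R) c :
  measurable_fun setT f -> measurable [set x | f x <= c].
Proof.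
move=> mf; have := mf measurableT _ (measurable_itv `]-oo, c]); rewrite setTI.
congr measurable; apply/seteqP; split => x /=; by rewrite in_itv /=.
Qed.

Lemma Lfun_meas d (T : measurableType d) (R : realType)
    (mu : {measure set T -> \bar R}) q (f : T -> R) :
  f \in Lfun mu q -> measurable_fun setT f.
Proof. by move=> /sub_Lfun_mfun; rewrite inE. Qed.

Theorem lemma3p1 (d : measure_display) (T : measurableType d) (R : realType)
    (mu : {measure set T -> \bar R}) (p : R) (q : \bar R)
    (eta g u : T -> R) :
  sigma_finite [set: T] mu ->
  diffuse mu ->
  1 <= p ->
  q = hoelder_conjugate p%:E ->
  eta \in Lfun mu q ->
  g \in Lfun mu p%:E ->
  {ae mu, forall x, 0 <= eta x} ->
  {ae mu, forall x, 0 <= g x} ->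
  u \in Lfun mu +oo%E ->
  {ae mu, forall x, 0 <= u x} ->
  (forall f : T -> R, f \in Lfun mu p%:E ->
     {ae mu, forall x, 0 <= f x} ->
     {ae mu, forall x, 0 <= Kop mu eta g f x - u x * f x}) ->
  {ae mu, forall x, u x = 0}.
Proof.
move=> [F FE Fm] dif p1 qE etaL gL eta0 g0 uL u0 HK.
have meta := @Lfun_meas _ _ _ mu _ _ etaL.
have mg := @Lfun_meas _ _ _ mu _ _ gL.
have mu_ := @Lfun_meas _ _ _ mu _ _ uL.
case: eta0 => Ne [mNe Ne0 sNe].
case: g0 => Ng [mNg Ng0 sNg].
case: u0 => Nu [mNu Nu0 sNu].
pose N := Ne `|` Ng `|` Nu.
have mN : measurable N by apply: measurableU => //; exact: measurableU.
have negN : mu.-negligible N.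
  apply: negligibleU; first apply: negligibleU.
  - by exists Ne; split.
  - by exists Ng; split.
  - by exists Nu; split.
have HN : forall x, ~ N x -> [/\ 0 <= eta x, 0 <= g x & 0 <= u x].
  move=> x Nx; split; apply: contrapT => h; apply: Nx.
  - by left; left; apply: sNe.
  - by left; right; apply: sNg.
  - by right; apply: sNu.
pose A k (n : nat) := F k `&` [set x | n.+1%:R^-1 <= u x] `&`
  [set x | eta x <= n.+1%:R] `&` [set x | g x <= n.+1%:R] `&` ~` N.
have mA : forall k n, measurable (A k n).
  move=> k n; apply: measurableI; last exact: measurableC.
  apply: measurableI; last exact: meas_le.
  apply: measurableI; last exact: meas_le.
  apply: measurableI; first exact: (Fm k).1.
  exact: meas_ge.
have negA : forall k n, mu.-negligible (A k n).
  move=> k n; apply/negligibleP => //.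
  have n0 : 0 < (n.+1%:R : R) by rewrite ltr0n.
  apply: (@diffuse_small _ _ _ mu (A k n) (n.+1%:R^-1 / (n.+1%:R * n.+1%:R)) dif).
  - exact: mA.
  - apply: le_lt_trans (Fm k).2.
    apply: le_measure; rewrite ?inE; [exact: mA|exact: (Fm k).1|].
    by move=> x [[[[]]]].
  - by rewrite divr_gt0 ?invr_gt0 ?mulr_gt0.
  apply: (@lower_bound _ _ _ mu p eta g u (fun x => ~ [/\ 0 <= eta x, 0 <= g x & 0 <= u x]) (A k n)) => //.
  - by move=> x /contrapT [].
  - move=> x [[[[_ h1] h2] h3] h4]; split => //.
    by move=> h; apply: h; apply: HN.
  - apply: le_lt_trans (Fm k).2.
    apply: le_measure; rewrite ?inE; [exact: mA|exact: (Fm k).1|].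
    by move=> x [[[[]]]].
apply: (negligibleS _ (negligibleU negN
  (negligible_bigcup (fun k => negligible_bigcup (fun n => negA k n))))).
move=> x /= ux0.
have [Nx|Nx] := pselect (N x); first by left.
right.
have [e0 g0 u0] := HN x Nx.
have upos : 0 < u x by rewrite lt_neqAle eq_sym; apply/andP; split => //; apply/eqP.
have : [set: T] x by [].
rewrite FE => -[k _ Fkx].
exists k => //.
pose n := Num.truncn (Num.max (u x)^-1 (Num.max (eta x) (g x))).
have hn := truncnS_gt (Num.max (u x)^-1 (Num.max (eta x) (g x))).
exists n => //.
have h1 : (u x)^-1 <= Num.max (u x)^-1 (Num.max (eta x) (g x)) by rewrite !le_max ?lexx ?orbT.
have h2 : eta x <= Num.max (u x)^-1 (Num.max (eta x) (g x)) by rewrite !le_max ?lexx ?orbT.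
have h3 : g x <= Num.max (u x)^-1 (Num.max (eta x) (g x)) by rewrite !le_max ?lexx ?orbT.
rewrite -/n in hn.
split; [split; [split; [split|]|]|] => //=.
- rewrite -(invrK (u x)) lef_pV2 ?posrE ?invr_gt0 ?ltr0n //.
  exact: ltW (le_lt_trans h1 hn).
- exact: ltW (le_lt_trans h2 hn).
- exact: ltW (le_lt_trans h3 hn).
Qed.
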